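(* Let $L\ge 2$ be an integer. For $\theta_1,\dots,\theta_L\in[0,2\pi)$, let $\theta_{(1)}\le\dots\le\theta_{(L)}$ be their sorted values, and let $\angle_k=\theta_{(k+1)}-\theta_{(k)}$ for $1\le k<L$, $\angle_L=2\pi-(\theta_{(L)}-\theta_{(1)})$. Define $$D(\theta_1,\dots,\theta_L)=\sum_{i=1}^{L-1}\sum_{j=i+1}^{L}\sin^2\Big(\sum_{k=i}^{j-1}\angle_k\Big).$$ Then the maximum of $D$ over all $(\theta_1,\dots,\theta_L)\in[0,2\pi)^L$ exists and equals $L^2/4$. *)

(* Defs.v *)
From Stdlib Require Import Reals Lra List Arith.
From Stdlib Require Import Orders Sorting.Mergesort Sorting.Sorted.
Import ListNotations.
Open Scope R_scope.

Module RLeBool <: TotalLeBool.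
  Definition t := R.
  Definition leb (x y : R) : bool := if Rle_dec x y then true else false.
  Infix "<=?" := leb (at level 70, no associativity).
  Theorem leb_total : forall x y, leb x y = true \/ leb y x = true.
  Proof.
    intros x y; unfold leb; destruct (Rle_dec x y); destruct (Rle_dec y x);
    auto; exfalso; lra.
  Qed.
End RLeBool.

Module RSort := Sort RLeBool.

(* sum_{k=m}^{n} f k  (empty if n < m) *)
Definition sumR (m n : nat) (f : nat -> R) : R :=
  fold_right Rplus 0 (map f (seq m (S n - m))).

(* theta_(k), 1-based: the k-th smallest of the values in th *)
Definition sorted_val (th : list R) (k : nat) : R :=
  nth (k - 1) (RSort.sort th) 0.

Definition angle (th : list R) (k : nat) : R :=
  let L := length th in
  if (k <? L)%nat then sorted_val th (S k) - sorted_val th k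
  else 2 * PI - (sorted_val th L - sorted_val th 1).

Definition D (th : list R) : R :=
  let L := length th in
  sumR 1 (L - 1) (fun i =>
    sumR (S i) L (fun j =>
      (sin (sumR i (j - 1) (fun k => angle th k))) ^ 2)).

Definition in_range (x : R) : Prop := 0 <= x < 2 * PI.

(* Main.v *)
Require Import Defs.
From Stdlib Require Import Reals List.
From Stdlib Require Import Lra Lia Psatz Sorting.Permutation.
Import ListNotations.
Open Scope R_scope.

Definition sumL (l : list R) := fold_right Rplus 0 l.
Definition Cs (l : list R) := sumL (map (fun x => cos (2*x)) l).
Definition Ss (l : list R) := sumL (map (fun x => sin (2*x)) l).
Fixpoint P (l : list R) : R := match l with
  | [] => 0
  | a :: l' => sumL (map (fun y => sin (y - a) ^ 2) l') + P l' end.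
Definition G (l : list R) : R :=
  sumR 1 (length l - 1) (fun i => sumR (S i) (length l)
    (fun j => sin (nth (j-1) l 0 - nth (i-1) l 0) ^ 2)).

Lemma sumL_app l1 l2 : sumL (l1 ++ l2) = sumL l1 + sumL l2.
Proof. induction l1; unfold sumL in *; simpl; [ring| rewrite IHl1; ring]. Qed.

Lemma sumL_perm (f : R -> R) (l l' : list R) : Permutation l l' -> sumL (map f l) = sumL (map f l').
Proof. intro H; induction H; unfold sumL in *; simpl; try lra. Qed.

Lemma sumR_shift m n f : sumR (S m) (S n) f = sumR m n (fun k => f (S k)).
Proof.
  unfold sumR. replace (S (S n) - S m)%nat with (S n - m)%nat by lia.
  rewrite <- seq_shift, map_map. reflexivity.
Qed.

Lemma sumR_split m n f : (m <= n)%nat -> sumR m n f = f m + sumR (S m) n f.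
Proof.
  intro H; unfold sumR. replace (S n - m)%nat with (S (n - m)) by lia.
  replace (S n - S m)%nat with (n - m)%nat by lia. reflexivity.
Qed.

Lemma sumR_empty n f : sumR (S n) n f = 0.
Proof. unfold sumR. rewrite Nat.sub_diag. reflexivity. Qed.

Lemma sumR_ext m n f g : (forall k, (m <= k <= n)%nat -> f k = g k) ->
  sumR m n f = sumR m n g.
Proof.
  intro H; unfold sumR. f_equal. apply map_ext_in. intros k Hk.
  apply in_seq in Hk. apply H. lia.
Qed.

Lemma sumR_nth (f : R -> R) l :
  sumR 1 (length l) (fun j => f (nth (j-1) l 0)) = sumL (map f l).
Proof.
  induction l as [|b l IH].
  - reflexivity.
  - cbn [length]. rewrite sumR_split by lia. rewrite sumR_shift.
    rewrite (sumR_ext _ _ _ (fun j => f (nth (j-1) l 0))).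
    + rewrite IH. reflexivity.
    + intros k Hk. destruct k; [lia|]. simpl. rewrite Nat.sub_0_r. reflexivity.
Qed.

Lemma sin2_expand y a :
  sin (y - a) ^ 2 = (1 - (cos (2*y) * cos (2*a) + sin (2*y) * sin (2*a))) / 2.
Proof.
  assert (H : cos (2*y) * cos (2*a) + sin (2*y) * sin (2*a) = cos (2*(y-a))).
  { rewrite <- cos_minus. f_equal. ring. }
  rewrite H, cos_2a_sin. field.
Qed.

Lemma inner_sum a l : sumL (map (fun y => sin (y - a) ^ 2) l) =
  INR (length l) / 2 - (Cs l * cos (2*a) + Ss l * sin (2*a)) / 2.
Proof.
  induction l as [|b l IH]; unfold Cs, Ss, sumL in *; cbn [map fold_right length] in *.
  - simpl. field.
  - rewrite IH, sin2_expand, S_INR. field.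
Qed.

Lemma P_formula l : P l = INR (length l) ^ 2 / 4 - (Cs l ^ 2 + Ss l ^ 2) / 4.
Proof.
  induction l as [|a l IH].
  - unfold Cs, Ss, sumL. simpl. field.
  - cbn [P length]. rewrite inner_sum, IH, S_INR.
    unfold Cs, Ss, sumL in *; cbn [map fold_right] in *.
    pose proof (sin2_cos2 (2*a)) as H. unfold Rsqr in H. nra.
Qed.

Lemma G_cons a l : G (a :: l) = sumL (map (fun y => sin (y - a) ^ 2) l) + G l.
Proof.
  destruct l as [|b l'].
  - unfold G, sumR, sumL. simpl. ring.
  - set (l := b :: l'). unfold G. cbn [length].
    replace (S (length l) - 1)%nat with (length l) by lia.
    assert (Hn : length l = S (length l')) by reflexivity.
    rewrite sumR_split by lia. f_equal.
    + cbn [nth Nat.sub]. rewrite sumR_shift.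
      rewrite <- (sumR_nth (fun y => sin (y - a) ^ 2)).
      apply sumR_ext. intros k Hk. destruct k; [lia|]. simpl. rewrite Nat.sub_0_r. reflexivity.
    + rewrite Hn, sumR_shift. rewrite <- Hn.
      replace (length l - 1)%nat with (length l') by (rewrite Hn; lia).
      apply sumR_ext. intros i Hi. rewrite sumR_shift.
      apply sumR_ext. intros j Hj. destruct i; [lia|]. destruct j; [lia|].
      simpl. rewrite !Nat.sub_0_r. reflexivity.
Qed.

Lemma G_P l : G l = P l.
Proof.
  induction l as [|a l IH].
  - reflexivity.
  - rewrite G_cons, IH. reflexivity.
Qed.

Lemma tele th : forall d i, (1 <= i)%nat -> (i + d < length th)%nat ->
  sumR i (i + d) (angle th) = sorted_val th (i + d + 1) - sorted_val th i.
Proof.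
  induction d; intros i H1 H2.
  - rewrite Nat.add_0_r. rewrite sumR_split by lia. rewrite sumR_empty.
    unfold angle; cbv zeta. rewrite (proj2 (Nat.ltb_lt _ _)) by lia.
    replace (i + 1)%nat with (S i) by lia. ring.
  - rewrite sumR_split by lia. replace (i + S d)%nat with (S i + d)%nat by lia.
    rewrite IHd by lia.
    unfold angle; cbv zeta. rewrite (proj2 (Nat.ltb_lt _ _)) by lia.
    replace (S i + d + 1)%nat with (i + S d + 1)%nat by lia. ring.
Qed.

Lemma D_G th : D th = G (RSort.sort th).
Proof.
  assert (Hlen : length (RSort.sort th) = length th)
    by (symmetry; apply Permutation_length, RSort.Permuted_sort).
  unfold D, G. rewrite Hlen. cbv zeta.
  apply sumR_ext. intros i Hi. apply sumR_ext. intros j Hj.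
  assert (E : sumR i (j - 1) (angle th) = sorted_val th j - sorted_val th i).
  { replace (j - 1)%nat with (i + (j - 1 - i))%nat by lia.
    rewrite tele by lia. replace (i + (j - 1 - i) + 1)%nat with j by lia. reflexivity. }
  change (fun k : nat => angle th k) with (angle th). rewrite E. reflexivity.
Qed.

Lemma D_formula th : D th = INR (length th) ^ 2 / 4 -
  (Cs (RSort.sort th) ^ 2 + Ss (RSort.sort th) ^ 2) / 4.
Proof.
  assert (Hlen : length (RSort.sort th) = length th)
    by (symmetry; apply Permutation_length, RSort.Permuted_sort).
  rewrite D_G, G_P, P_formula, Hlen. reflexivity.
Qed.

Lemma tele_cos a N : 2 * sin a * sumL (map (fun k => cos (2 * INR k * a)) (seq 0 N))
  = sin ((2 * INR N - 1) * a) + sin a.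
Proof.
  induction N as [|N IH].
  - unfold sumL; simpl. replace ((2 * 0 - 1) * a) with (- a) by ring.
    rewrite sin_neg. ring.
  - rewrite seq_S, map_app, sumL_app. unfold sumL at 2. cbn [map fold_right].
    rewrite Rmult_plus_distr_l, IH, S_INR.
    replace ((2 * INR N - 1) * a) with (2 * INR N * a - a) by ring.
    replace ((2 * (INR N + 1) - 1) * a) with (2 * INR N * a + a) by ring.
    rewrite sin_minus, sin_plus. simpl Nat.add. ring.
Qed.

Lemma tele_sin a N : 2 * sin a * sumL (map (fun k => sin (2 * INR k * a)) (seq 0 N))
  = cos a - cos ((2 * INR N - 1) * a).
Proof.
  induction N as [|N IH].
  - unfold sumL; simpl. replace ((2 * 0 - 1) * a) with (- a) by ring.
    rewrite cos_neg. ring.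
  - rewrite seq_S, map_app, sumL_app. unfold sumL at 2. cbn [map fold_right].
    rewrite Rmult_plus_distr_l, IH, S_INR.
    replace ((2 * INR N - 1) * a) with (2 * INR N * a - a) by ring.
    replace ((2 * (INR N + 1) - 1) * a) with (2 * INR N * a + a) by ring.
    rewrite cos_minus, cos_plus. simpl Nat.add. ring.
Qed.

Theorem lemma2 (L : nat) (hL : (2 <= L)%nat) :
  (forall th : list R, length th = L -> Forall in_range th ->
     D th <= (INR L) ^ 2 / 4) /\
  (exists th : list R, length th = L /\ Forall in_range th /\
     D th = (INR L) ^ 2 / 4).
Proof.
  split.
  - intros th Hl _. rewrite D_formula, Hl.
    pose proof (pow2_ge_0 (Cs (RSort.sort th))).
    pose proof (pow2_ge_0 (Ss (RSort.sort th))). lra.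
  - assert (HL2 : 2 <= INR L) by (replace 2 with (INR 2) by reflexivity; apply le_INR; lia).
    assert (HLnz : INR L <> 0) by lra.
    pose proof PI_RGT_0 as Hpi.
    set (a := PI / INR L).
    assert (Ha : a * INR L = PI) by (unfold a; field; auto).
    assert (Ha0 : 0 < a) by (unfold a; apply Rdiv_lt_0_compat; lra).
    assert (HaPI : a < PI) by nra.
    assert (Hsa : 0 < sin a) by (apply sin_gt_0; lra).
    assert (Hend : (2 * INR L - 1) * a = - a + 2 * INR 1 * PI)
      by (simpl (INR 1); rewrite <- Ha; ring).
    exists (map (fun k => INR k * a) (seq 0 L)).
    split; [|split].
    + rewrite length_map, length_seq. reflexivity.
    + apply Forall_forall. intros x Hx. apply in_map_iff in Hx.
      destruct Hx as [k [<- Hk]]. apply in_seq in Hk.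
      assert (Hk2 : INR k + 1 <= INR L) by (rewrite <- S_INR; apply le_INR; lia).
      pose proof (pos_INR k). unfold in_range. split; nra.
    + rewrite D_formula, length_map, length_seq.
      assert (HP := RSort.Permuted_sort (map (fun k => INR k * a) (seq 0 L))).
      unfold Cs, Ss. rewrite <- !(sumL_perm _ _ _ HP), !map_map.
      assert (HC : sumL (map (fun k => cos (2 * (INR k * a))) (seq 0 L)) = 0).
      { pose proof (tele_cos a L) as T. rewrite Hend, sin_period, sin_neg in T.
        rewrite (map_ext _ (fun k => cos (2 * INR k * a))) by (intro; f_equal; ring).
        nra. }
      assert (HS : sumL (map (fun k => sin (2 * (INR k * a))) (seq 0 L)) = 0).
      { pose proof (tele_sin a L) as T. rewrite Hend, cos_period, cos_neg in T.
        rewrite (map_ext _ (fun k => sin (2 * INR k * a))) by (intro; f_equal; ring).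
        nra. }
      rewrite HC, HS. unfold pow; lra.
Qed.
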